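(* Let $\ell\ge1$ and let $C=(w_1,\dots,w_{2\ell+1})$ be a semi-valid tuple in $\Omega_n$. Then the edge set of $H_n^{(2)}(C)$ consists exactly of the pairs $\{w_i,w_{i+1}\}$ for $1\le i\le 2\ell+1$ together with all pairs $\{v,w_i\}$ with $v\in(w_{i-1},w_{i+1})$, $1\le i\le 2\ell+1$ (indices of the $w$'s mod $2\ell+1$). In particular $|H_n^{(2)}(C)|=n$.
   Context: $\Omega_n=\{v_0,\dots,v_{n-1}\}$ with cyclic order $v_0<v_1<\dots<v_{n-1}<v_0$ (indices mod $n$). For distinct vertices $u,w$, $(u,w)$ is the set of vertices strictly between $u$ and $w$ when moving clockwise (increasing index mod $n$) from $u$ to $w$, and $[u,w]=(u,w)\cup\{u,w\}$. A tuple $C=(w_1,\dots,w_{2\ell+1})$ of distinct vertices is semi-valid if $w_1<w_3<w_5<\dots<w_{2\ell+1}<w_2<w_4<\dots<w_{2\ell}<w_1$, meaning these vertices appear in this clockwise cyclic order. For such $C$ and $r\ge2$, $H_n^{(r)}(C)=\{e\in\binom{\Omega_n}{r}: e\cap[w_i,w_{i-1}]\neq\emptyset\ \text{for all } i\in\{1,\dots,2\ell+1\}\}$, with indices of the $w$'s taken mod $2\ell+1$ (so $[w_1,w_0]=[w_1,w_{2\ell+1}]$). *)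

(* Defs.v *)
From mathcomp Require Import all_boot.
Set Implicit Arguments. Unset Strict Implicit. Unset Printing Implicit Defensive.

(* Omega_n = {v_0,...,v_{n-1}} is modelled by 'I_n (v_k = k), cyclic order by
   increasing index mod n. *)

Definition cdist (n : nat) (u x : 'I_n) : nat := (x + n - u) %% n.

(* x \in (u, w): strictly between u and w moving clockwise from u *)
Definition cyc_open (n : nat) (u w x : 'I_n) : bool :=
  (0 < cdist u x) && (cdist u x < cdist u w).

Definition cyc_closed (n : nat) (u w x : 'I_n) : bool :=
  [|| x == u, x == w | cyc_open u w x].

(* A tuple C = (w_1, ..., w_{2l+1}) is given 0-based as w : 'I_(2l+1) -> 'I_n
   (w_{k+1} in the paper is w k here).  wat w k = w_{(k mod (2l+1)) + 1}. *)
Definition wat (n l : nat) (w : 'I_(l.*2.+1) -> 'I_n) (k : nat) : 'I_n :=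
  w (Ordinal (@ltn_pmod k l.*2.+1 (ltn0Sn _))).

(* the sequence w_1, w_3, ..., w_{2l+1}, w_2, w_4, ..., w_{2l} (paper indexing) *)
Definition sv_seq (n l : nat) (w : 'I_(l.*2.+1) -> 'I_n) : seq 'I_n :=
  [seq wat w (2 * j) | j <- iota 0 l.+1] ++ [seq wat w (2 * j + 1) | j <- iota 0 l].

(* semi-valid: the w's are distinct and appear in the above clockwise cyclic order,
   i.e. their clockwise distances from w_1 strictly increase along the sequence. *)
Definition semi_valid (n l : nat) (w : 'I_(l.*2.+1) -> 'I_n) : bool :=
  uniq (sv_seq w) &&
  sorted ltn [seq cdist (wat w 0) x | x <- sv_seq w].

(* H_n^{(2)}(C): 2-subsets meeting every [w_i, w_{i-1}] *)
Definition H2 (n l : nat) (w : 'I_(l.*2.+1) -> 'I_n) : {set {set 'I_n}} :=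
  [set e : {set 'I_n} | (#|e| == 2) &&
     [forall i : 'I_(l.*2.+1),
        [exists x in e, cyc_closed (wat w i) (wat w (i + l.*2)) x]]].

(* Main.v *)
Require Import Defs.
From mathcomp Require Import all_boot zify.
Set Implicit Arguments. Unset Strict Implicit. Unset Printing Implicit Defensive.

Lemma cdistE n (u x : 'I_n) : cdist u x = if u <= x then x - u else x + n - u.
Proof.
rewrite /cdist; have h3 := ltn_ord x; have h2 := ltn_ord u; case: leqP => h1.
  have ->: x + n - u = (x - u) + n by lia.
  by rewrite modnDr modn_small //; lia.
by rewrite modn_small //; lia.
Qed.

Lemma modcase x m : x < m.*2 -> (x < m /\ x %% m = x) \/ (m <= x /\ x %% m = x - m).
Proof.
move=> h; case: (ltnP x m) => h1; first by left; rewrite modn_small.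
right; split => //; have ->: x = (x - m) + m by lia.
by rewrite modnDr modn_small; lia.
Qed.

Lemma cdist_shift n (o u x : 'I_n) : cdist u x =
  if cdist o u <= cdist o x then cdist o x - cdist o u else cdist o x + n - cdist o u.
Proof.
have := ltn_ord x; have := ltn_ord u; have := ltn_ord o.
move=> ? ? ?; rewrite !cdistE; case: (leqP u x); case: (leqP o u); case: (leqP o x); move=> *; case: ifP => ?; lia.
Qed.

Lemma cdist_lt n (o x : 'I_n) : cdist o x < n.
Proof. have := ltn_ord x; have := ltn_ord o; move=> ? ?; rewrite cdistE; case: (leqP o x); lia. Qed.

Lemma cdist_inj n (o x y : 'I_n) : cdist o x = cdist o y -> x = y.
Proof.
move=> h; apply: ord_inj; move: h.
have := ltn_ord x; have := ltn_ord y; have := ltn_ord o.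
move=> ? ? ?; rewrite !cdistE; case: (leqP o x); case: (leqP o y); lia.
Qed.

Lemma open_d n (o u w x : 'I_n) : cyc_open u w x =
  if cdist o u <= cdist o w then (cdist o u < cdist o x) && (cdist o x < cdist o w)
  else (cdist o u < cdist o x) || (cdist o x < cdist o w).
Proof.
rewrite /cyc_open (cdist_shift o u x) (cdist_shift o u w).
have := cdist_lt o x; have := cdist_lt o u; have := cdist_lt o w.
move: (cdist o x) (cdist o u) (cdist o w) => a b c hc hb ha.
case: (leqP b a) => h1; case: (leqP b c) => h2.
- apply/andP/andP => -[]; lia.
- apply/andP/orP => [[]|[]]; lia.
- apply/andP/andP => -[]; lia.
- apply/andP/orP => [[]|[]]; lia.
Qed.

Lemma closed_d n (o u w x : 'I_n) : cyc_closed u w x =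
  [|| cdist o x == cdist o u, cdist o x == cdist o w | cyc_open u w x].
Proof.
rewrite /cyc_closed; congr [|| _, _ | _].
  by apply/eqP/eqP => [->//|/cdist_inj].
by apply/eqP/eqP => [->//|/cdist_inj].
Qed.

Lemma modcase' x m r : r = x %% m -> x < m.*2 -> (x < m /\ r = x) \/ (m <= x /\ r = x - m).
Proof.
move=> -> h; case: (ltnP x m) => h1; first by left; rewrite modn_small.
right; split => //; have ->: x = (x - m) + m by lia.
by rewrite modnDr modn_small; lia.
Qed.

Ltac mc x m r := let e := fresh "e" in
  have e := modcase' (x := x) (m := m) (erefl r) ltac:(lia);
  clearbody r; case: e => [[? ?]|[? ?]].

Lemma L1 m b t : b < m -> t < m -> (b + m - (b + m - t) %% m) %% m = t.
Proof.
move=> hb ht; set r := (b + m - t) %% m; mc (b + m - t) m r;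
set s := (b + m - r) %% m; mc (b + m - r) m s; lia.
Qed.

Lemma L2 m bx by' t : bx < m -> by' < m -> t < m ->
  (by' + m - (bx + m - t) %% m) %% m = ((by' + m - bx) %% m + t) %% m.
Proof.
move=> hb hb' ht; set r := (bx + m - t) %% m; mc (bx + m - t) m r;
set s := (by' + m - r) %% m; mc (by' + m - r) m s;
set d := (by' + m - bx) %% m; mc (by' + m - bx) m d;
set q := (d + t) %% m; mc (d + t) m q; lia.
Qed.

Lemma L3 m bx by' : bx < m -> by' < m -> by' = (bx + (by' + m - bx) %% m) %% m.
Proof.
move=> hb hb'; set d := (by' + m - bx) %% m; mc (by' + m - bx) m d;
set q := (bx + d) %% m; mc (bx + d) m q; lia.
Qed.

Lemma L5 m bx by' : bx < m -> by' < m ->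
  ((by' + m - bx) %% m == 0) && ((bx + m - by') %% m == 0) || ((by' + m - bx) %% m + (bx + m - by') %% m == m).
Proof.
move=> hb hb'; set d := (by' + m - bx) %% m; mc (by' + m - bx) m d;
set q := (bx + m - by') %% m; mc (bx + m - by') m q; lia.
Qed.

Definition Cond (l c b : nat) (u : bool) := (b + l.*2.+1 - c) %% l.*2.+1 < l + u.
Lemma core_fw l bx by' (ux uy : bool) : 0 < l -> bx < l.*2.+1 -> by' < l.*2.+1 ->
  (forall c, c < l.*2.+1 -> Cond l c bx ux || Cond l c by' uy) ->
  (uy && (by' == (bx + l.+1) %% l.*2.+1)) || (ux && (bx == (by' + l.+1) %% l.*2.+1)).
Proof.
move=> l0 hx hy H.
have := H ((bx + l.*2.+1 - (l + ux)) %% l.*2.+1) (ltn_pmod _ (ltn0Sn _)).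
have := H ((bx + l.*2.+1 - l.*2) %% l.*2.+1) (ltn_pmod _ (ltn0Sn _)).
rewrite /Cond => {H}.
rewrite !L1 ?L2 //; [|lia..].
have h5 := L5 hx hy.
have e1 := L3 hx hy. have e2 := L3 hy hx.
move: h5 e1 e2.
set d := (by' + _ - bx) %% _. set d' := (bx + _ - by') %% _.
have hd : d < l.*2.+1 by apply: ltn_pmod.
have hd' : d' < l.*2.+1 by apply: ltn_pmod.
move=> h5 e1 e2 h1 h2; clearbody d d'.
suff key : (uy && (d == l.+1)) || (ux && (d' == l.+1)).
  case/orP: key => /andP[-> /eqP hh].
    by rewrite {1}e1 hh /=; apply/orP; left.
  by apply/orP; right; rewrite /= {1}e2 hh.
clear e1 e2.
move: h1 h2 h5.
set s1 := (d + (l + ux)) %% _.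
set s2 := (d + l.*2) %% _.
mc (d + (l + ux)) l.*2.+1 s1; mc (d + l.*2) l.*2.+1 s2.
all: move=> h1 h2 /orP[/andP[/eqP ? /eqP ?]|/eqP ?]; destruct ux; destruct uy; simpl in *; lia.
Qed.

Lemma core_bw l bx by' (ux : bool) : 0 < l -> bx < l.*2.+1 -> by' = (bx + l.+1) %% l.*2.+1 ->
  (forall c, c < l.*2.+1 -> Cond l c bx ux || Cond l c by' true).
Proof.
move=> l0 hx -> c hc; rewrite /Cond.
set r1 := (bx + l.+1) %% _.
set a2 := (r1 + _ - c) %% _.
have hr1 : r1 < l.*2.+1 by apply: ltn_pmod.
mc (r1 + l.*2.+1 - c) l.*2.+1 a2.
all: mc (bx + l.+1) l.*2.+1 r1.
all: set a1 := (bx + _ - c) %% _; mc (bx + l.*2.+1 - c) l.*2.+1 a1.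
all: lia.
Qed.

Definition pp n l (w : 'I_(l.*2.+1) -> 'I_n) (j : nat) : 'I_n := nth (wat w 0) (sv_seq w) j.
Definition DD n l (w : 'I_(l.*2.+1) -> 'I_n) j := cdist (wat w 0) (pp w j).
Definition bb n l (w : 'I_(l.*2.+1) -> 'I_n) (x : 'I_n) :=
  \max_(j < l.*2.+1 | DD w j <= cdist (wat w 0) x) j.
Definition ub n l (w : 'I_(l.*2.+1) -> 'I_n) (x : 'I_n) := cdist (wat w 0) x == DD w (bb w x).

Lemma size_sv n l (w : 'I_(l.*2.+1) -> 'I_n) : size (sv_seq w) = l.*2.+1.
Proof. by rewrite /sv_seq size_cat !size_map !size_iota; lia. Qed.

Lemma pp_even n l (w : 'I_(l.*2.+1) -> 'I_n) j : j <= l -> pp w j = wat w (2 * j).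
Proof.
move=> hj; rewrite /pp /sv_seq nth_cat size_map size_iota ltnS hj.
by rewrite (nth_map 0) ?size_iota // nth_iota.
Qed.

Lemma pp_odd n l (w : 'I_(l.*2.+1) -> 'I_n) j : j < l -> pp w (l.+1 + j) = wat w (2 * j + 1).
Proof.
move=> hj; rewrite /pp /sv_seq nth_cat size_map size_iota ltnNge leq_addr /= addKn.
by rewrite (nth_map 0) ?size_iota // nth_iota.
Qed.

Lemma wat_mod n l (w : 'I_(l.*2.+1) -> 'I_n) k : wat w k = wat w (k %% l.*2.+1).
Proof. by rewrite /wat; congr w; apply: ord_inj => /=; rewrite modn_mod. Qed.

Lemma wat_pos n l (w : 'I_(l.*2.+1) -> 'I_n) k : wat w k = pp w ((k * l.+1) %% l.*2.+1).
Proof.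
rewrite wat_mod -(modnMml k).
have : k %% l.*2.+1 < l.*2.+1 by apply: ltn_pmod.
move: (k %% l.*2.+1) => r hr.
have [[j [hj ->]]|[j [hj ->]]] : (exists j, j <= l /\ r = 2 * j) \/ (exists j, j < l /\ r = 2 * j + 1).
  have := odd_double_half r; case: (odd r) => /= h; [right | left]; exists r./2; lia.
  have -> : 2 * j * l.+1 = j * l.*2.+1 + j by lia.
  by rewrite modnMDl modn_small ?pp_even //; lia.
have -> : (2 * j + 1) * l.+1 = j * l.*2.+1 + (l.+1 + j) by lia.
by rewrite modnMDl modn_small ?pp_odd //; lia.
Qed.

Lemma DD0 n l (w : 'I_(l.*2.+1) -> 'I_n) : DD w 0 = 0.
Proof. by rewrite /DD pp_even // muln0 cdistE leqnn subnn. Qed.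

Lemma DD_mono n l (w : 'I_(l.*2.+1) -> 'I_n) i j : semi_valid w ->
  i < j -> j < l.*2.+1 -> DD w i < DD w j.
Proof.
case/andP=> _ hs hij hj.
have := @sorted_ltn_nth _ _ ltn_trans 0 _ hs i j.
rewrite !inE size_map size_sv => /(_ (ltn_trans hij hj) hj hij).
by rewrite !(nth_map (wat w 0)) ?size_sv //; apply: ltn_trans hj.
Qed.

Lemma DD_le n l (w : 'I_(l.*2.+1) -> 'I_n) i j : semi_valid w ->
  i < l.*2.+1 -> j < l.*2.+1 -> (DD w i <= DD w j) = (i <= j).
Proof.
move=> hv hi hj; case: (ltngtP i j) => h.
- by apply: ltnW; apply: DD_mono.
- by apply/negbTE; rewrite -ltnNge; apply: DD_mono.
- by rewrite h leqnn.
Qed.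

Lemma bb_ge n l (w : 'I_(l.*2.+1) -> 'I_n) x j : j < l.*2.+1 ->
  DD w j <= cdist (wat w 0) x -> j <= bb w x.
Proof.
move=> hj h.
exact: (@leq_bigmax_cond _ (fun j : 'I_l.*2.+1 => DD w j <= cdist (wat w 0) x)
           (fun j : 'I_l.*2.+1 => nat_of_ord j) (Ordinal hj)).
Qed.

Lemma bb_spec n l (w : 'I_(l.*2.+1) -> 'I_n) x :
  bb w x < l.*2.+1 /\ DD w (bb w x) <= cdist (wat w 0) x.
Proof.
rewrite /bb; elim/big_rec: _ => [|j r hj [h1 h2]]; first by rewrite DD0.
by rewrite /maxn; case: ifP => _ //; split => //; exact: ltn_ord.
Qed.

Lemma bb_le n l (w : 'I_(l.*2.+1) -> 'I_n) x j : semi_valid w -> j < l.*2.+1 ->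
  (DD w j <= cdist (wat w 0) x) = (j <= bb w x).
Proof.
move=> hv hj; apply/idP/idP; first exact: bb_ge.
have [hb1 hb2] := bb_spec w x.
rewrite leq_eqVlt => /orP[/eqP -> //|h].
by apply: leq_trans hb2; apply: ltnW; apply: DD_mono.
Qed.

Lemma bb_eq n l (w : 'I_(l.*2.+1) -> 'I_n) x j : semi_valid w -> j < l.*2.+1 ->
  (cdist (wat w 0) x == DD w j) = (j == bb w x) && ub w x.
Proof.
move=> hv hj; rewrite /ub; apply/eqP/andP => [h|[/eqP <- /eqP //]].
have hle : j <= bb w x by rewrite -bb_le // h.
have [hb1 hb2] := bb_spec w x.
have h' : bb w x <= j.
  rewrite leqNgt; apply/negP => hlt; have := DD_mono hv hlt hb1; lia.
have ej : j = bb w x by apply/eqP; rewrite eqn_leq hle h'.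
by split; [rewrite ej | rewrite -ej h].
Qed.

Lemma bb_lt n l (w : 'I_(l.*2.+1) -> 'I_n) x j : semi_valid w -> j < l.*2.+1 ->
  (DD w j < cdist (wat w 0) x) = (j < bb w x) || ((j == bb w x) && ~~ ub w x).
Proof.
move=> hv hj; rewrite ltn_neqAle (bb_le _ hv hj) eq_sym (bb_eq _ hv hj).
case: (ub w x); lia.
Qed.

Lemma gt_bb n l (w : 'I_(l.*2.+1) -> 'I_n) x j : semi_valid w -> j < l.*2.+1 ->
  (cdist (wat w 0) x < DD w j) = (bb w x < j).
Proof. by move=> hv hj; rewrite ltnNge (bb_le _ hv hj) -ltnNge. Qed.

Lemma pp_marked n l (w : 'I_(l.*2.+1) -> 'I_n) j : semi_valid w -> j < l.*2.+1 ->
  bb w (pp w j) = j /\ ub w (pp w j).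
Proof.
move=> hv hj; have : cdist (wat w 0) (pp w j) == DD w j by [].
by rewrite (bb_eq _ hv hj) => /andP[/eqP <- ->].
Qed.

Lemma marked_pp n l (w : 'I_(l.*2.+1) -> 'I_n) x : ub w x -> x = pp w (bb w x).
Proof. by move/eqP => h; apply: (cdist_inj (o := wat w 0)). Qed.

Lemma arc n l (w : 'I_(l.*2.+1) -> 'I_n) c x : semi_valid w -> c < l.*2.+1 ->
  cyc_closed (pp w c) (pp w ((c + l) %% l.*2.+1)) x = Cond l c (bb w x) (ub w x).
Proof.
move=> hv hc.
have hc' : (c + l) %% l.*2.+1 < l.*2.+1 by apply: ltn_pmod.
rewrite (closed_d (wat w 0)) (open_d (wat w 0)).
rewrite -/(DD w c) -/(DD w ((c + l) %% l.*2.+1)).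
rewrite (bb_eq _ hv hc) (bb_eq _ hv hc') (DD_le hv hc hc') (bb_lt _ hv hc) (gt_bb _ hv hc').
rewrite /Cond.
have [hb _] := bb_spec w x.
move: hb hc'; move: (bb w x) (ub w x) => b u hb.
set c' := (c + l) %% _.
mc (c + l) l.*2.+1 c'.
all: set k := (b + _ - c) %% _; mc (b + l.*2.+1 - c) l.*2.+1 k.
all: move=> hc'; case: (leqP c c') => hcc; case: u; lia.
Qed.

Lemma gap n l (w : 'I_(l.*2.+1) -> 'I_n) j v : 0 < l -> semi_valid w -> j < l.*2.+1 ->
  cyc_open (pp w j) (pp w ((j + 1) %% l.*2.+1)) v = (bb w v == j) && ~~ ub w v.
Proof.
move=> l0 hv hj.
have hj' : (j + 1) %% l.*2.+1 < l.*2.+1 by apply: ltn_pmod.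
rewrite (open_d (wat w 0)).
rewrite -/(DD w j) -/(DD w ((j + 1) %% l.*2.+1)).
rewrite (DD_le hv hj hj') (bb_lt _ hv hj) (gt_bb _ hv hj').
have [hb _] := bb_spec w v.
move: hb hj'; move: (bb w v) (ub w v) => b u hb.
set c' := (j + 1) %% _.
mc (j + 1) l.*2.+1 c'.
all: move=> hc'; case: (leqP j c') => hcc; case: u; lia.
Qed.

Lemma wat_iS n l (w : 'I_(l.*2.+1) -> 'I_n) (i : nat) :
  wat w i.+1 = pp w (((i * l.+1) %% l.*2.+1 + l.+1) %% l.*2.+1).
Proof. by rewrite wat_pos modnDml; congr (pp w (_ %% _)); lia. Qed.

Lemma wat_im n l (w : 'I_(l.*2.+1) -> 'I_n) (i : nat) :
  wat w (i + l.*2) = pp w (((i * l.+1) %% l.*2.+1 + l) %% l.*2.+1).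
Proof.
rewrite wat_pos modnDml.
have -> : (i + l.*2) * l.+1 = l * l.*2.+1 + (i * l.+1 + l) by lia.
by rewrite modnMDl.
Qed.

Lemma pos_surj l c : c < l.*2.+1 -> exists i : 'I_l.*2.+1, (i * l.+1) %% l.*2.+1 = c.
Proof.
move=> hc; exists (Ordinal (ltn_pmod c.*2 (ltn0Sn l.*2))) => /=.
rewrite modnMml.
have -> : c.*2 * l.+1 = c * l.*2.+1 + c by lia.
by rewrite modnMDl modn_small.
Qed.

Lemma ex2 n (P : pred 'I_n) x y : [exists z in [set x; y], P z] = P x || P y.
Proof.
apply/existsP/orP.
  by case=> z /andP[/set2P[->|->] h]; [left|right].
case=> h; [exists x | exists y]; rewrite ?set21 ?set22 //.
Qed.

Lemma H2P n l (w : 'I_(l.*2.+1) -> 'I_n) e : semi_valid w ->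
  (e \in H2 w) = (#|e| == 2) &&
     [forall c : 'I_l.*2.+1, [exists x in e, Cond l c (bb w x) (ub w x)]].
Proof.
move=> hv; rewrite inE; congr (_ && _).
apply/forallP/forallP => h c.
  have [i hi] := pos_surj (ltn_ord c).
  have /existsP[x /andP[xe hx]] := h i.
  apply/existsP; exists x; rewrite xe /=.
  by rewrite wat_im wat_pos hi arc in hx.
have /existsP[x /andP[xe hx]] := h (Ordinal (ltn_pmod (c * l.+1) (ltn0Sn l.*2))).
apply/existsP; exists x; rewrite xe /=.
by rewrite wat_im wat_pos arc // ltn_pmod.
Qed.

Definition ff n l (w : 'I_(l.*2.+1) -> 'I_n) (x : 'I_n) :=
  [set x; pp w ((bb w x + l.+1) %% l.*2.+1)].

Lemma nofix l b : 0 < l -> b < l.*2.+1 -> (b + l.+1) %% l.*2.+1 != b.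
Proof.
move=> l0 hb; set r := (b + l.+1) %% _; mc (b + l.+1) l.*2.+1 r; lia.
Qed.

Lemma nofix2 l b : 0 < l -> b < l.*2.+1 -> ((b + l.+1) %% l.*2.+1 + l.+1) %% l.*2.+1 != b.
Proof.
move=> l0 hb; set r := (b + l.+1) %% _.
have hr : r < l.*2.+1 by apply: ltn_pmod.
set s := (r + l.+1) %% _; mc (r + l.+1) l.*2.+1 s.
all: mc (b + l.+1) l.*2.+1 r.
all: lia.
Qed.

Lemma back l b : b < l.*2.+1 -> ((b + l.+1) %% l.*2.+1 + l) %% l.*2.+1 = b.
Proof.
move=> hb; rewrite modnDml (_ : b + l.+1 + l = b + l.*2.+1); last by lia.
by rewrite modnDr modn_small.
Qed.

Lemma back2 l b : b < l.*2.+1 -> ((b + l) %% l.*2.+1 + l.+1) %% l.*2.+1 = b.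
Proof.
move=> hb; rewrite modnDml (_ : b + l + l.+1 = b + l.*2.+1); last by lia.
by rewrite modnDr modn_small.
Qed.

Lemma f_H2 n l (w : 'I_(l.*2.+1) -> 'I_n) x : 0 < l -> semi_valid w -> ff w x \in H2 w.
Proof.
move=> l0 hv; rewrite H2P // /ff.
have [hb _] := bb_spec w x.
have hj : (bb w x + l.+1) %% l.*2.+1 < l.*2.+1 by apply: ltn_pmod.
have [e1 e2] := pp_marked hv hj.
apply/andP; split.
  rewrite cards2; have [hxy|hxy] := eqVneq x (pp w ((bb w x + l.+1) %% l.*2.+1)); last by [].
  by move: e1; rewrite -hxy => e1; have := nofix l0 hb; rewrite -e1 eqxx.
apply/forallP => c; rewrite ex2 e1 e2.
exact: core_bw.
Qed.

Lemma H2_f n l (w : 'I_(l.*2.+1) -> 'I_n) e : 0 < l -> semi_valid w ->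
  e \in H2 w -> exists x, e = ff w x.
Proof.
move=> l0 hv; rewrite H2P // => /andP[/cards2P[x [y [hxy ->]]] /forallP h].
have H : forall c, c < l.*2.+1 ->
    Cond l c (bb w x) (ub w x) || Cond l c (bb w y) (ub w y).
  by move=> c hc; have := h (Ordinal hc); rewrite ex2.
case/orP: (core_fw l0 (bb_spec w x).1 (bb_spec w y).1 H) => /andP[hu /eqP hb].
  by exists x; rewrite /ff -hb -(marked_pp hu).
by exists y; rewrite /ff -hb -(marked_pp hu) setUC.
Qed.

Lemma ff_inj n l (w : 'I_(l.*2.+1) -> 'I_n) : 0 < l -> semi_valid w -> injective (ff w).
Proof.
move=> l0 hv x y hxy.
have hx : x \in ff w y by rewrite -hxy set21.
have hy : y \in ff w x by rewrite hxy set21.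
case/set2P: hx => [//|ex]; case/set2P: hy => [->//|ey].
have [e1 _] := pp_marked hv (ltn_pmod (bb w y + l.+1) (ltn0Sn l.*2)).
have [e2 _] := pp_marked hv (ltn_pmod (bb w x + l.+1) (ltn0Sn l.*2)).
rewrite -ex in e1; rewrite -ey in e2.
have := nofix2 l0 (bb_spec w x).1.
by rewrite -e2 -e1 eqxx.
Qed.

Lemma forms_f n l (w : 'I_(l.*2.+1) -> 'I_n) e : 0 < l -> semi_valid w ->
     (exists i : 'I_(l.*2.+1), e = [set wat w i; wat w i.+1]) \/
     (exists (i : 'I_(l.*2.+1)) (v : 'I_n),
        cyc_open (wat w (i + l.*2)) (wat w i.+1) v /\ e = [set v; wat w i]) ->
  exists z, e = ff w z.
Proof.
move=> l0 hv [[i ->]|[i [v [hov ->]]]].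
  set c := (i * l.+1) %% l.*2.+1.
  have hc : c < l.*2.+1 by apply: ltn_pmod.
  exists (pp w c); rewrite /ff (pp_marked hv hc).1.
  by rewrite wat_iS (wat_pos w i).
set c := (i * l.+1) %% l.*2.+1.
have hc : c < l.*2.+1 by apply: ltn_pmod.
rewrite wat_im wat_iS -/c in hov.
rewrite (_ : (c + l.+1) %% l.*2.+1 = ((c + l) %% l.*2.+1 + 1) %% l.*2.+1) in hov; last first.
  by rewrite modnDml addn1 addnS.
have hj : (c + l) %% l.*2.+1 < l.*2.+1 by apply: ltn_pmod.
move: hov; rewrite gap // => /andP[/eqP hb hu].
by exists v; rewrite /ff hb back2 // (wat_pos w i).
Qed.

Lemma f_forms n l (w : 'I_(l.*2.+1) -> 'I_n) x : 0 < l -> semi_valid w ->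
     (exists i : 'I_(l.*2.+1), ff w x = [set wat w i; wat w i.+1]) \/
     (exists (i : 'I_(l.*2.+1)) (v : 'I_n),
        cyc_open (wat w (i + l.*2)) (wat w i.+1) v /\ ff w x = [set v; wat w i]).
Proof.
move=> l0 hv; have [hb _] := bb_spec w x.
case hu: (ub w x).
  left; have [i hi] := pos_surj hb.
  by exists i; rewrite wat_iS (wat_pos w i) hi /ff -(marked_pp hu).
right; set c := (bb w x + l.+1) %% l.*2.+1.
have hc : c < l.*2.+1 by apply: ltn_pmod.
have [i hi] := pos_surj hc.
exists i, x; split; last by rewrite (wat_pos w i) hi.
rewrite wat_im wat_iS hi.
rewrite (_ : (c + l.+1) %% l.*2.+1 = ((c + l) %% l.*2.+1 + 1) %% l.*2.+1); last first.
  by rewrite modnDml addn1 addnS.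
by rewrite back // gap // eqxx hu.
Qed.

Unset Implicit Arguments.
Theorem lemma3p1 (n l : nat) (w : 'I_(l.*2.+1) -> 'I_n) :
  1 <= l -> semi_valid w ->
  (forall e : {set 'I_n},
     e \in H2 w <->
     (exists i : 'I_(l.*2.+1), e = [set wat w i; wat w i.+1]) \/
     (exists (i : 'I_(l.*2.+1)) (v : 'I_n),
        cyc_open (wat w (i + l.*2)) (wat w i.+1) v /\ e = [set v; wat w i]))
  /\ #|H2 w| = n.
Proof.
move=> l0 hv; split.
  move=> e; split => [/(H2_f l0 hv) [x ->]|/(forms_f l0 hv) [z ->]].
    exact: f_forms.
  exact: f_H2.
have -> : H2 w = ff w @: setT.
  apply/setP => e; apply/idP/imsetP => [/(H2_f l0 hv) [x ->]|[x _ ->]].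
    by exists x.
  exact: f_H2.
by rewrite card_imset ?cardsT ?card_ord //; apply: ff_inj.
Qed.
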